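(* Let $\mathcal{L}$ be a distributive abstract logic. For all $a,b\in Expr_{\mathcal{L}}$, $a\le b$ if and only if $a\Vdash_{\mathcal{L}} b$.
   Context: An abstract logic is a triple $\mathcal{L}=(Expr_{\mathcal{L}},Th_{\mathcal{L}},\mathcal{C}_{\mathcal{L}})$ where $Expr_{\mathcal{L}}$ is a set, $Th_{\mathcal{L}}$ a non-empty set of subsets of $Expr_{\mathcal{L}}$ (theories) closed under intersections of non-empty subfamilies, and $\mathcal{C}_{\mathcal{L}}$ a set of operations on $Expr_{\mathcal{L}}$. $\mathcal{L}$ is closed under union of chains if the union of every non-empty chain of theories is a theory. A theory $T$ is prime if $T=\bigcap\mathcal{T}$ with $\mathcal{T}\subseteq Th_{\mathcal{L}}$ non-empty finite implies $T\in\mathcal{T}$; totally prime if this holds for non-empty $\mathcal{T}$ of any size. $PTh_{\mathcal{L}}$, $TPTh_{\mathcal{L}}$ denote these sets. A distributive abstract logic is one closed under union of chains with binary connectives $\vee,\wedge$ such that for all $a,b$ and all $T\in TPTh_{\mathcal{L}}$: $a\vee b\in T$ iff $a\in T$ or $b\in T$; $a\wedge b\in T$ iff $a,b\in T$. $b\Vdash_{\mathcal{L}}a$ means $a$ belongs to every theory containing $b$. The order: $a\le b$ iff $S_a\subseteq S_b$, where $S_a=\{P\in PTh_{\mathcal{L}}: a\in P\}$. *)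

(* Defs.v *)
From Stdlib Require Import List Vectors.Fin.

Set Implicit Arguments.

(* Subsets of Expr are predicates
   Expr -> Prop; equality of subsets is Leibniz equality of predicates
   (extensional under the whitelisted funext/propext axioms). *)

Definition bigcap (E : Type) (F : (E -> Prop) -> Prop) : E -> Prop :=
  fun a => forall U, F U -> U a.

Definition bigcup (E : Type) (F : (E -> Prop) -> Prop) : E -> Prop :=
  fun a => exists U, F U /\ U a.

Record abstract_logic := AbstractLogic {
  Expr : Type;
  Th : (Expr -> Prop) -> Prop;
  Conn : forall n : nat, ((Fin.t n -> Expr) -> Expr) -> Prop;
  Th_nonempty : exists T, Th T;
  Th_inter : forall F : (Expr -> Prop) -> Prop,
      (exists T, F T) -> (forall T, F T -> Th T) -> Th (bigcap F)
}.

Section AL.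
Variable L : abstract_logic.

Definition subset_of (A B : Expr L -> Prop) : Prop := forall a, A a -> B a.

Definition finite_family (F : (Expr L -> Prop) -> Prop) : Prop :=
  exists l : list (Expr L -> Prop), forall U, F U <-> In U l.

Definition chain_of_theories (F : (Expr L -> Prop) -> Prop) : Prop :=
  (exists T, F T) /\ (forall T, F T -> Th L T) /\
  (forall T U, F T -> F U -> subset_of T U \/ subset_of U T).

Definition closed_under_union_of_chains : Prop :=
  forall F, chain_of_theories F -> Th L (bigcup F).

Definition prime_theory (T : Expr L -> Prop) : Prop :=
  Th L T /\
  forall F : (Expr L -> Prop) -> Prop,
    (forall U, F U -> Th L U) -> (exists U, F U) -> finite_family F ->
    T = bigcap F -> F T.

Definition totally_prime_theory (T : Expr L -> Prop) : Prop :=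
  Th L T /\
  forall F : (Expr L -> Prop) -> Prop,
    (forall U, F U -> Th L U) -> (exists U, F U) ->
    T = bigcap F -> F T.

Definition binop (f : Expr L -> Expr L -> Expr L) : (Fin.t 2 -> Expr L) -> Expr L :=
  fun v => f (v Fin.F1) (v (Fin.FS Fin.F1)).

Definition distributive_logic : Prop :=
  closed_under_union_of_chains /\
  exists (vee wedge : Expr L -> Expr L -> Expr L),
    @Conn L 2 (binop vee) /\ @Conn L 2 (binop wedge) /\
    forall a b T, totally_prime_theory T ->
      (T (vee a b) <-> T a \/ T b) /\ (T (wedge a b) <-> T a /\ T b).

Definition entails (b a : Expr L) : Prop :=
  forall T, Th L T -> T b -> T a.

Definition S_ (a : Expr L) : (Expr L -> Prop) -> Prop :=
  fun P => prime_theory P /\ P a.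

Definition le_expr (a b : Expr L) : Prop := forall P, S_ a P -> S_ b P.

End AL.

(* Main.v *)
Require Import Defs.
From Stdlib Require Import Classical ProofIrrelevance FunctionalExtensionality PropExtensionality.
From mathcomp Require Import all_boot.
From mathcomp Require Import boolp classical_sets.

Lemma max_th (L : abstract_logic) (HL : distributive_logic L) (T : Expr L -> Prop) (b : Expr L) :
  Th L T -> ~ T b ->
  exists M, Th L M /\ subset_of L T M /\ ~ M b /\
    forall U, Th L U -> subset_of L M U -> ~ U b -> U = M.
Proof.
intros HT Hb.
set Q := fun X : Expr L -> Prop => Th L X /\ subset_of L T X /\ ~ X b.
pose sT := {X : Expr L -> Prop | Q X}.
pose R := fun s t : sT => `[< subset_of L (proj1_sig s) (proj1_sig t) >].
assert (HQT : Q T) by (split; [exact HT| split; [intros x Hx; exact Hx| exact Hb]]).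
destruct (@Zorn sT R) as [t Ht].
- intros s; apply/asboolP; intros x Hx; exact Hx.
- intros r s u H1 H2; apply/asboolP; move/asboolP: H1 => H1; move/asboolP: H2 => H2.
  intros x Hx; auto.
- intros [X HX] [Y HY] H1 H2; move/asboolP: H1 => H1; move/asboolP: H2 => H2.
  simpl in *.
  assert (X = Y) as E.
  { apply functional_extensionality; intros x; apply propositional_extensionality; split; auto. }
  subst Y. f_equal. apply proof_irrelevance.
- intros A HA.
  destruct (Classical_Prop.classic (exists s, A s)) as [[s0 Hs0]|Hne].
  + pose F := fun X => exists s, A s /\ proj1_sig s = X.
    assert (Hch : chain_of_theories L F).
    { split; [exists (proj1_sig s0); exists s0; auto|split].
      - intros X [s [_ E]]; subst X. exact (proj1 (proj2_sig s)).
      - intros X Y [s [Hs E1]] [u [Hu E2]]; subst X Y.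
        destruct (HA s u Hs Hu) as [H|H]; move/asboolP: H => H; auto. }
    assert (HU : Q (Defs.bigcup F)).
    { split; [exact (proj1 HL F Hch)|split].
      - intros x Hx. exists (proj1_sig s0); split; [exists s0; auto|].
        exact (proj1 (proj2 (proj2_sig s0)) x Hx).
      - intros [X [[s [_ E]] Hs]]; subst X. exact (proj2 (proj2 (proj2_sig s)) Hs). }
    exists (exist _ _ HU). intros s Hs; apply/asboolP; intros x Hx; simpl.
    exists (proj1_sig s); split; [exists s; auto|auto].
  + exists (exist _ _ HQT). intros s Hs; exfalso; apply Hne; eauto.
- destruct t as [M [HM1 [HM2 HM3]]].
  exists M; split; [auto|split; [auto|split; [auto|]]].
  intros U HU1 HU2 HU3.
  assert (HQU : Q U) by (split; [auto|split; [intros x Hx; auto|auto]]).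
  specialize (Ht (exist _ U HQU)).
  assert (E : exist Q U HQU = exist Q M (conj HM1 (conj HM2 HM3))).
  { apply Ht. apply/asboolP. simpl. exact HU2. }
  apply (f_equal (@proj1_sig _ _)) in E. exact E.
Qed.

Theorem corollary3p11 (L : abstract_logic) (HL : distributive_logic L) :
  forall a b : Expr L, @le_expr L a b <-> @entails L a b.
Proof.
intros a b; split.
- intros Hle T HT Ha. apply Classical_Prop.NNPP; intros Hb.
  destruct (@max_th L HL T b HT Hb) as [M [HM1 [HM2 [HM3 HM4]]]].
  apply HM3. apply (Hle M). split; [|auto].
  split; [auto|].
  intros F HF Hne _ HMF.
  apply Classical_Prop.NNPP; intros HnF. apply HM3.
  rewrite HMF. intros U HFU.
  apply Classical_Prop.NNPP; intros HUb.
  assert (HMU : subset_of L M U) by (intros x Hx; rewrite HMF in Hx; apply Hx; auto).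
  pose proof (HM4 U (HF U HFU) HMU HUb) as E. subst U. contradiction.
- intros He P [[HP Hpr] Ha]. split; [split; auto| apply (He P HP Ha)].
Qed.
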